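(* For any temporal feedback graph $\mathcal{S}$ on $T$ rounds, the optimal value of the upper bound dual program (maximize $\sum_{t=1}^T\mu_t$ subject to $\sum_{t\in C_c}\mu_t^2\le 1$ for all $c\in[N]$ and $\mu_t\ge 0$ for all $t\in[T]$) equals $\mathsf{UB}(\mathcal{S})$, the optimal value of the upper bound program (minimize $\sum_{c=1}^N\sqrt{\sum_{t\in C_c}\lambda_{c,t}^2}$ subject to $\sum_{c=1}^N\lambda_{c,t}=1$ for all $t\in[T]$, $\lambda_{c,t}=0$ if $t\notin C_c$, $\lambda_{c,t}\ge0$).
   Context: A temporal feedback graph $\mathcal{S}$ is a collection of subsets $S_t\subseteq[T]\setminus\{t\}$, $t\in[T]$. A sequence of rounds $t_1,\dots,t_w$ is an order if $t_u\in S_{t_v}$ for all $u<v$; it is maximal if no super-sequence of it is an order. $C_1,\dots,C_N$ denote all maximal orders of $\mathcal{S}$. *)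

(* Defs.v *)
From HB Require Import structures.
From mathcomp Require Import all_boot all_order all_algebra.
From mathcomp Require Import boolp classical_sets reals.
Set Implicit Arguments. Unset Strict Implicit. Unset Printing Implicit Defensive.
Import Order.TTheory GRing.Theory Num.Theory.
Local Open Scope ring_scope.
Local Open Scope classical_set_scope.

(* A temporal feedback graph on T rounds: S t is a subset of [T] \ {t}.
   Rounds are 'I_T (i.e. 0..T-1). *)
Definition tfg_wf (T : nat) (S : 'I_T -> {set 'I_T}) : Prop :=
  forall t, t \notin S t.

Definition is_order (T : nat) (S : 'I_T -> {set 'I_T}) (s : seq 'I_T) : bool :=
  pairwise (fun a b => a \in S b) s.

Definition is_maximal_order (T : nat) (S : 'I_T -> {set 'I_T}) (s : seq 'I_T) : Prop :=
  is_order S s /\ forall s', is_order S s' -> subseq s s' -> s' = s.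

(* all sequences over 'I_T of length at most T (orders have distinct entries,
   hence length <= T) *)
Definition short_seqs (T : nat) : seq (seq 'I_T) :=
  flatten [seq [seq tval tu | tu <- enum {: n.-tuple 'I_T}] | n <- iota 0 T.+1].

(* The list C_1, ..., C_N of all maximal orders (each listed once) *)
Definition max_orders (T : nat) (S : 'I_T -> {set 'I_T}) : seq (seq 'I_T) :=
  [seq s <- short_seqs T | `[< is_maximal_order S s >] ].

Definition ub_feasible (R : realType) (T : nat) (S : 'I_T -> {set 'I_T})
    (lam : seq 'I_T -> 'I_T -> R) : Prop :=
  (forall t : 'I_T, \sum_(C <- max_orders S) lam C t = 1) /\
  (forall C, C \in max_orders S -> forall t, t \notin C -> lam C t = 0) /\
  (forall C, C \in max_orders S -> forall t, 0 <= lam C t).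

Definition ub_objective (R : realType) (T : nat) (S : 'I_T -> {set 'I_T})
    (lam : seq 'I_T -> 'I_T -> R) : R :=
  \sum_(C <- max_orders S) Num.sqrt (\sum_(t <- C) lam C t ^+ 2).

Definition UB (R : realType) (T : nat) (S : 'I_T -> {set 'I_T}) : R :=
  inf [set v : R | exists lam, ub_feasible S lam /\ v = ub_objective S lam].

Definition dual_feasible (R : realType) (T : nat) (S : 'I_T -> {set 'I_T})
    (mu : 'I_T -> R) : Prop :=
  (forall C, C \in max_orders S -> \sum_(t <- C) mu t ^+ 2 <= 1) /\
  (forall t, 0 <= mu t).

Definition dual_objective (R : realType) (T : nat) (mu : 'I_T -> R) : R :=
  \sum_(t < T) mu t.

Definition dual_value (R : realType) (T : nat) (S : 'I_T -> {set 'I_T}) : R :=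
  sup [set v : R | exists mu, dual_feasible S mu /\ v = dual_objective mu].

(* Main.v *)
Require Import Defs.
From HB Require Import structures.
From mathcomp Require Import all_boot all_order all_algebra.
From mathcomp Require Import boolp classical_sets reals.
From mathcomp Require Import ring lra.
Set Implicit Arguments. Unset Strict Implicit. Unset Printing Implicit Defensive.
Import Order.TTheory GRing.Theory Num.Theory.
Local Open Scope ring_scope.
Local Open Scope classical_set_scope.

Section HB.
Variables (R : realType) (V : lmodType R).

Lemma inf_le_elt (E : set R) (l x : R) : (forall z, E z -> l <= z) -> E x -> inf E <= x.
Proof. by move=> lb Ex; apply: (ge_inf (ex_intro _ l lb)). Qed.

Lemma le_inf_elt (E : set R) (l x : R) : E x -> (forall z, E z -> l <= z) -> l <= inf E.
Proof. by move=> Ex lb; apply: lb_le_inf; [exists x|]. Qed.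

Definition sublin (p : V -> R) :=
  (forall x y, p (x + y) <= p x + p y) /\ (forall (a : R) x, 0 <= a -> p (a *: x) = a * p x).

Variable p : V -> R.
Hypothesis hp : sublin p.

Lemma p0 : p 0 = 0.
Proof. by case: hp => _ h; rewrite -(scale0r 0) h ?mul0r. Qed.

Lemma pv_ge (v : V) (s : R) : p v * s <= p (s *: v).
Proof.
case: hp => hs hh; have [s0|s0] := leP 0 s.
  by rewrite hh // mulrC.
have : p 0 <= p v + p (- v) by rewrite -(subrr v) hs.
rewrite p0 => h.
have -> : s *: v = (- s) *: (- v) by rewrite scaleNr scalerN opprK.
rewrite hh; last by lra.
nra.
Qed.

Variable v : V.
Definition proj (x : V) := inf (range (fun s : R => p (x + s *: v) - p v * s)).

Lemma proj_lb x s : - p (- x) <= p (x + s *: v) - p v * s.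
Proof.
case: hp => hs _.
have h1 : p (s *: v) <= p (x + s *: v) + p (- x).
  by have := hs (x + s *: v) (- x); rewrite [X in p X]addrC addKr.
have := pv_ge v s; lra.
Qed.

Lemma proj_le x s : proj x <= p (x + s *: v) - p v * s.
Proof.
apply: (inf_le_elt (l := - p (- x))); last by exists s.
by move=> z [s' _ <-]; apply: proj_lb.
Qed.

Lemma proj_ge x y : (forall s, y <= p (x + s *: v) - p v * s) -> y <= proj x.
Proof.
move=> h; apply: (le_inf_elt (x := p (x + 0 *: v) - p v * 0)); first by exists 0.
by move=> z [s _ <-].
Qed.

Lemma proj_lep x : proj x <= p x.
Proof. by have := proj_le x 0; rewrite scale0r addr0 mulr0 subr0. Qed.

Lemma proj_sublin : sublin proj.
Proof.
case: hp => hs hh; split.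
  move=> x y.
  have h1 : forall s1, proj (x + y) - (p (x + s1 *: v) - p v * s1) <= proj y.
    move=> s1; apply: proj_ge => s2.
    have := proj_le (x + y) (s1 + s2).
    have := hs (x + s1 *: v) (y + s2 *: v).
    have -> : x + s1 *: v + (y + s2 *: v) = x + y + (s1 + s2) *: v.
      by rewrite scalerDl addrACA.
    lra.
  have h2 : proj (x + y) - proj y <= proj x.
    by apply: proj_ge => s; have := h1 s; lra.
  lra.
move=> a x; rewrite le_eqVlt => /orP [/eqP <-|a0].
  rewrite scale0r mul0r; apply/eqP; rewrite eq_le; apply/andP; split.
    by have := proj_le 0 0; rewrite scale0r addr0 mulr0 subr0 p0.
  by apply: proj_ge => s; have := proj_lb 0 s; rewrite oppr0 p0 oppr0.
apply/eqP; rewrite eq_le; apply/andP; split.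
  have h : proj (a *: x) / a <= proj x.
    apply: proj_ge => s.
    have := proj_le (a *: x) (a * s).
    rewrite -scalerA -scalerDr hh; last by lra.
    move=> h; rewrite ler_pdivrMr //.
    have -> : (p (x + s *: v) - p v * s) * a = a * p (x + s *: v) - p v * (a * s) by ring.
    done.
  by rewrite -ler_pdivrMl // mulrC.
apply: proj_ge => s.
have e : a * (s / a) = s by rewrite mulrCA mulfV ?mulr1 // gt_eqF.
have := proj_le x (s / a).
have -> : a *: x + s *: v = a *: (x + (s / a) *: v).
  by rewrite scalerDr scalerA e.
rewrite hh; last by lra.
move=> h.
have -> : a * p (x + (s / a) *: v) - p v * s = a * (p (x + (s / a) *: v) - p v * (s / a)).
  by rewrite mulrBr; congr (_ - _); rewrite mulrCA e.
by rewrite ler_pM2l.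
Qed.

Lemma proj_trans x t : proj (x + t *: v) = proj x + p v * t.
Proof.
apply/eqP; rewrite eq_le; apply/andP; split.
  have : proj (x + t *: v) - p v * t <= proj x.
    apply: proj_ge => s; have := proj_le (x + t *: v) (s - t).
    rewrite -addrA -scalerDl.
    have -> : t + (s - t) = s by ring.
    lra.
  lra.
have : proj x + p v * t <= proj (x + t *: v).
  apply: proj_ge => s; have := proj_le x (t + s).
  by rewrite scalerDl addrA; lra.
lra.
Qed.

Lemma proj_keep w d : (forall x s, p (x + s *: w) = p x + d * s) ->
  forall x s, proj (x + s *: w) = proj x + d * s.
Proof.
move=> hw x t.
apply/eqP; rewrite eq_le; apply/andP; split.
  have : proj (x + t *: w) - d * t <= proj x.
    apply: proj_ge => s; have := proj_le (x + t *: w) s.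
    by rewrite addrAC hw; lra.
  lra.
have : proj x + d * t <= proj (x + t *: w).
  apply: proj_ge => s; have := proj_le x s.
  by rewrite addrAC hw; lra.
lra.
Qed.

End HB.

Section HBfin.
Variables (R : realType) (T : nat).
Implicit Types (p : 'rV[R]_T -> R).

Lemma hb_iter p (u : 'rV[R]_T) (ws : seq 'I_T) : sublin p ->
  exists q (d : 'I_T -> R), [/\ sublin q, (forall x, q x <= p x),
    (forall x s, q (x + s *: u) = q x + p u * s) &
    (forall i, i \in ws -> forall x s, q (x + s *: delta_mx 0 i) = q x + d i * s)].
Proof.
move=> hp; elim: ws => [|i ws [q [d [hq qp qu qw]]]].
  exists (proj p u), (fun _ => 0); split => //.
  - exact: proj_sublin.
  - exact: proj_lep.
  - exact: proj_trans.
exists (proj q (delta_mx 0 i)), (fun j => if j == i then q (delta_mx 0 i) else d j).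
split.
- exact: proj_sublin.
- by move=> x; apply: le_trans (qp x); apply: proj_lep.
- exact: proj_keep.
move=> j; rewrite inE; case: eqP => [-> _|_ /= jw].
  exact: proj_trans.
exact: proj_keep (qw j jw).
Qed.

Lemma hb_final p (u : 'rV[R]_T) : sublin p ->
  exists mu : 'I_T -> R, (forall x : 'rV[R]_T, \sum_i mu i * x 0 i <= p x) /\ \sum_i mu i * u 0 i = p u.
Proof.
move=> hp; have [q [d [hq qp qu qw]]] := hb_iter u (enum 'I_T) hp.
have lin : forall x, q x = \sum_i d i * x 0 i.
  move=> x.
  have gen : forall r (y : 'rV[R]_T), q (y + \sum_(i <- r) x 0 i *: delta_mx 0 i) = q y + \sum_(i <- r) d i * x 0 i.
    elim => [|i r IH] y; first by rewrite !big_nil !addr0.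
    rewrite !big_cons addrCA addrC qw ?mem_enum // IH.
    by rewrite -addrA [_ + d i * _]addrC.
  by rewrite {1}(row_sum_delta x) -[X in q X]add0r gen (p0 hq) add0r.
exists d; split.
  by move=> x; rewrite -lin.
by have := qu 0 1; rewrite add0r scale1r (p0 hq) add0r mulr1 => <-; rewrite lin.
Qed.
End HBfin.

Section CS.
Variable R : realType.

Lemma cs (I : eqType) (r : seq I) (f g : I -> R) :
  \sum_(i <- r) f i * g i <= Num.sqrt (\sum_(i <- r) f i ^+ 2) * Num.sqrt (\sum_(i <- r) g i ^+ 2).
Proof.
set A := \sum_(i <- r) f i ^+ 2; set B := \sum_(i <- r) g i ^+ 2.
set C := \sum_(i <- r) f i * g i.
have A0 : 0 <= A by apply: sumr_ge0 => i _; apply: sqr_ge0.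
have B0 : 0 <= B by apply: sumr_ge0 => i _; apply: sqr_ge0.
set a := Num.sqrt A; set b := Num.sqrt B.
have a0 : 0 <= a by apply: sqrtr_ge0.
have b0 : 0 <= b by apply: sqrtr_ge0.
have aA : a ^+ 2 = A by apply: sqr_sqrtr.
have bB : b ^+ 2 = B by apply: sqr_sqrtr.
have key : 2 * a * b * C <= b ^+ 2 * A + a ^+ 2 * B.
  rewrite /C /A /B mulr_sumr !mulr_sumr -big_split /=.
  apply: ler_sum => i _.
  have := sqr_ge0 (f i * b - g i * a); nra.
have [hab|hab] := ltP 0 (a * b).
  rewrite -aA -bB in key; nra.
have : a * b = 0 by apply/eqP; rewrite eq_le hab mulr_ge0.
move/eqP; rewrite mulf_eq0 => /orP [] /eqP h.
  have : A = 0 by rewrite -aA h expr2 mulr0.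
  move/eqP; rewrite psumr_eq0; last by move=> i _; apply: sqr_ge0.
  move=> /allP hf.
  rewrite /C big_seq big1 ?h ?mul0r // => i /hf /=.
  by rewrite sqrf_eq0 => /eqP ->; rewrite mul0r.
have : B = 0 by rewrite -bB h expr2 mulr0.
move/eqP; rewrite psumr_eq0; last by move=> i _; apply: sqr_ge0.
move=> /allP hf.
rewrite /C big_seq big1 ?h ?mulr0 // => i /hf /=.
by rewrite sqrf_eq0 => /eqP ->; rewrite mulr0.
Qed.

Lemma minkowski (I : eqType) (r : seq I) (f g : I -> R) :
  Num.sqrt (\sum_(i <- r) (f i + g i) ^+ 2) <=
  Num.sqrt (\sum_(i <- r) f i ^+ 2) + Num.sqrt (\sum_(i <- r) g i ^+ 2).
Proof.
set a := Num.sqrt (\sum_(i <- r) f i ^+ 2); set b := Num.sqrt (\sum_(i <- r) g i ^+ 2).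
have a0 : 0 <= a by apply: sqrtr_ge0.
have b0 : 0 <= b by apply: sqrtr_ge0.
rewrite -(ger0_norm (addr_ge0 a0 b0)) -sqrtr_sqr; apply: ler_wsqrtr.
have aA : a ^+ 2 = \sum_(i <- r) f i ^+ 2 by apply: sqr_sqrtr; apply: sumr_ge0 => i _; apply: sqr_ge0.
have bB : b ^+ 2 = \sum_(i <- r) g i ^+ 2 by apply: sqr_sqrtr; apply: sumr_ge0 => i _; apply: sqr_ge0.
have := cs r f g; rewrite -/a -/b => hc.
rewrite (eq_bigr (fun i => f i ^+ 2 + (2 * (f i * g i) + g i ^+ 2))); last by move=> i _; ring.
rewrite big_split big_split /= -mulr_sumr -aA -bB; nra.
Qed.

End CS.

Section Comb.
Variables (T : nat) (S : 'I_T -> {set 'I_T}).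
Hypothesis wf : tfg_wf S.

Lemma order_uniq s : is_order S s -> uniq s.
Proof. by apply: pairwise_uniq => a; apply/negbTE/wf. Qed.

Lemma mem_M C : C \in max_orders S -> is_maximal_order S C.
Proof. by rewrite mem_filter => /andP [/asboolP h _]. Qed.

Lemma M_uniqC C : C \in max_orders S -> uniq C.
Proof. by move=> /mem_M [h _]; apply: order_uniq. Qed.

Lemma short_uniq_gen m k :
  uniq (flatten [seq [seq tval tu | tu <- enum {: n.-tuple 'I_T}] | n <- iota m k]).
Proof.
elim: k m => [|k IH] m //=.
rewrite cat_uniq IH andbT; apply/andP; split.
  by rewrite map_inj_uniq ?enum_uniq //; apply: val_inj.
apply/hasPn => s /flattenP [l /mapP [n nin ->] /mapP [tu _ ->]].
apply/negP => /mapP [tu' _ e].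
move: nin; rewrite mem_iota => /andP [h _].
have := size_tuple tu; have := size_tuple tu'; rewrite -e => -> hn.
by move: h; rewrite hn ltnn.
Qed.

Lemma M_uniq : uniq (max_orders S).
Proof. by apply: filter_uniq; apply: short_uniq_gen. Qed.

Lemma mem_short (s : seq (ordinal T)) : (size s <= T)%N -> s \in short_seqs T.
Proof.
move=> hs; apply/flattenP.
exists [seq tval tu | tu <- enum {: (size s).-tuple 'I_T}].
  by apply/mapP; exists (size s) => //; rewrite mem_iota add0n ltnS hs.
by apply/mapP; exists (in_tuple s) => //; rewrite mem_enum.
Qed.

Lemma order_size s : is_order S s -> (size s <= T)%N.
Proof.
move=> /order_uniq us.
have := uniq_leq_size us (s2 := enum 'I_T); rewrite size_enum_ord; apply.
by move=> x _; rewrite mem_enum.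
Qed.

Lemma cover t : exists2 C, C \in max_orders S & t \in C.
Proof.
pose P n := `[< exists s, [/\ is_order S s, t \in s & size s = n] >].
have exP : exists n, P n.
  by exists 1%N; apply/asboolP; exists [:: t]; split => //; rewrite inE.
have bnd : forall n, P n -> (n <= T)%N.
  by move=> n /asboolP [s [os _ <-]]; apply: order_size.
case: (ex_maxnP exP bnd) => n /asboolP [s [os ts sz]] mx.
have maxs : is_maximal_order S s.
  split => // s' os' sub.
  have ts' : t \in s' by apply: (mem_subseq sub).
  have h1 : (size s' <= n)%N by apply: mx; apply/asboolP; exists s'.
  have [h2 E] := size_subseq_leqif sub.
  by apply/esym/eqP; rewrite -E eqn_leq h2 /= sz.
exists s => //.
rewrite mem_filter; apply/andP; split; first by apply/asboolP.
by apply: mem_short; apply: order_size.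
Qed.

End Comb.

Section App.
Variables (R : realType) (T : nat) (S : 'I_T -> {set 'I_T}).
Hypothesis wf : tfg_wf S.
Local Notation M := (max_orders S).

Definition feas (x : 'rV[R]_T) (lam : seq 'I_T -> 'I_T -> R) : Prop :=
  [/\ forall C, C \in M -> forall t, t \notin C -> lam C t = 0,
      forall C, C \in M -> forall t, 0 <= lam C t
    & forall t, x 0 t <= \sum_(C <- M) lam C t].

Definition Lset (x : 'rV[R]_T) : set R :=
  [set v | exists lam, feas x lam /\ v = ub_objective S lam].
Definition pp x := inf (Lset x).

Lemma obj_ge0 (lam : seq 'I_T -> 'I_T -> R) : 0 <= ub_objective S lam.
Proof. by rewrite /ub_objective; apply: sumr_ge0 => C _; apply: sqrtr_ge0. Qed.

Lemma obj0 : ub_objective S (fun _ _ => (0 : R)) = 0.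
Proof.
rewrite /ub_objective big1 // => C _.
by rewrite big1 ?sqrtr0 // => t _; rewrite expr2 mulr0.
Qed.

Lemma feas_ex x : exists lam, feas x lam.
Proof.
exists (fun C t => if t \in C then `|x 0 t| else 0); split.
- by move=> C _ t /negbTE ->.
- by move=> C _ t; case: ifP.
move=> t; have [C CM tC] := cover wf t.
rewrite (big_rem C CM) /= tC.
apply: le_trans (ler_norm (x 0 t)) _; rewrite lerDl.
by apply: sumr_ge0 => C' _; case: ifP.
Qed.

Lemma pp_le x lam : feas x lam -> pp x <= ub_objective S lam.
Proof.
move=> fl; apply: (inf_le_elt (l := 0)); last by exists lam.
by move=> z [l [_ ->]]; apply: obj_ge0.
Qed.

Lemma pp_ge x y : (forall lam, feas x lam -> y <= ub_objective S lam) -> y <= pp x.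
Proof.
move=> h; have [l fl] := feas_ex x.
apply: (le_inf_elt (x := ub_objective S l)); first by exists l.
by move=> z [l' [fl' ->]]; apply: h.
Qed.

Lemma pp_ge0 x : 0 <= pp x.
Proof. by apply: pp_ge => lam _; apply: obj_ge0. Qed.

Lemma feas0 (x : 'rV[R]_T) : (forall t, x 0 t <= 0) -> feas x (fun _ _ => 0).
Proof. by move=> hx; split => // t; rewrite big1 // hx. Qed.

Lemma pp_sublin : sublin pp.
Proof.
split.
  move=> x y.
  have h1 : forall l1, feas x l1 -> pp (x + y) - ub_objective S l1 <= pp y.
    move=> l1 f1; apply: pp_ge => l2 f2.
    have f12 : feas (x + y) (fun C t => l1 C t + l2 C t).
      case: f1 => s1 n1 c1; case: f2 => s2 n2 c2; split.
      - by move=> C CM t tC; rewrite s1 ?s2 ?addr0.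
      - by move=> C CM t; rewrite addr_ge0 ?n1 ?n2.
      - by move=> t; rewrite big_split mxE lerD.
    have := pp_le f12.
    have : ub_objective S (fun C t => l1 C t + l2 C t) <= ub_objective S l1 + ub_objective S l2.
      rewrite /ub_objective -big_split; apply: ler_sum => C _; apply: minkowski.
    lra.
  have h2 : pp (x + y) - pp y <= pp x.
    by apply: pp_ge => l1 f1; have := h1 l1 f1; lra.
  lra.
have sc : forall b (z : 'rV[R]_T) l, 0 < b -> feas z l ->
    feas (b *: z) (fun C t => b * l C t) /\
    ub_objective S (fun C t => b * l C t) = b * ub_objective S l.
  move=> b z l b0 [s1 n1 c1]; split; first split.
  - by move=> C CM t tC; rewrite s1 ?mulr0.
  - by move=> C CM t; rewrite mulr_ge0 ?n1 // ltW.
  - by move=> t; rewrite mxE -mulr_sumr ler_pM2l.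
  rewrite /ub_objective mulr_sumr; apply: eq_bigr => C _.
  rewrite (eq_bigr (fun t => b ^+ 2 * l C t ^+ 2)); last by move=> t _; rewrite exprMn.
  by rewrite -mulr_sumr sqrtrM ?sqr_ge0 // sqrtr_sqr ger0_norm // ltW.
move=> a x; rewrite le_eqVlt => /orP [/eqP <-|a0].
  rewrite scale0r mul0r; apply/eqP; rewrite eq_le pp_ge0 andbT.
  have f0 : feas 0 (fun _ _ => 0) by apply: feas0 => t; rewrite mxE.
  by have := pp_le f0; rewrite obj0.
apply/eqP; rewrite eq_le; apply/andP; split.
  have : pp (a *: x) / a <= pp x.
    apply: pp_ge => l fl; have [f' e'] := sc a x l a0 fl.
    by rewrite ler_pdivrMr // mulrC -e'; exact: pp_le f'.
  by rewrite ler_pdivrMr // mulrC.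
apply: pp_ge => l fl.
have ai : 0 < a^-1 by rewrite invr_gt0.
have [f' e'] := sc _ _ l ai fl.
rewrite scalerA mulVf ?gt_eqF // scale1r in f'.
have := pp_le f'; rewrite e' => h.
have : a * pp x <= a * (a^-1 * ub_objective S l) by rewrite ler_pM2l.
by rewrite mulrA mulfV ?gt_eqF // mul1r.
Qed.


Lemma weak (mu : 'I_T -> R) lam : dual_feasible S mu -> ub_feasible S lam ->
  dual_objective mu <= ub_objective S lam.
Proof.
case=> dm dn [ls [lz ln]].
rewrite /dual_objective.
have -> : \sum_t mu t = \sum_(C <- M) \sum_t mu t * lam C t.
  rewrite exchange_big /=; apply: eq_bigr => t _.
  by rewrite -mulr_sumr ls mulr1.
rewrite /ub_objective big_seq [X in _ <= X]big_seq; apply: ler_sum => C CM.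
have uC := M_uniqC wf CM.
have -> : \sum_t mu t * lam C t = \sum_(t <- C) mu t * lam C t.
  rewrite [RHS]big_uniq // [RHS]big_mkcond /=; apply: eq_bigr => t _.
  by case: ifP => // /negbT tC; rewrite lz ?mulr0.
apply: le_trans (cs _ _ _) _.
have h := dm C CM.
have hs : Num.sqrt (\sum_(t <- C) mu t ^+ 2) <= 1 by rewrite -sqrtr1; apply: ler_wsqrtr.
have := sqrtr_ge0 (\sum_(t <- C) lam C t ^+ 2).
have := sqrtr_ge0 (\sum_(t <- C) mu t ^+ 2).
nra.
Qed.

Lemma feas_norm lam : feas (const_mx 1) lam ->
  exists lam', ub_feasible S lam' /\ ub_objective S lam' <= ub_objective S lam.
Proof.
case=> s1 n1 c1.
pose s t := \sum_(C <- M) lam C t.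
have s_ge1 : forall t, 1 <= s t by move=> t; have := c1 t; rewrite mxE.
have s_ne0 : forall t, s t != 0 by move=> t; have := s_ge1 t; apply: contraTneq => ->; rewrite ler10.
exists (fun C t => lam C t / s t); split; first (split; last split).
- by move=> t; rewrite -mulr_suml mulfV ?s_ne0.
- by move=> C CM t tC; rewrite s1 ?mul0r.
- move=> C CM t; rewrite divr_ge0 ?n1 //; have := s_ge1 t; lra.
rewrite /ub_objective big_seq [X in _ <= X]big_seq; apply: ler_sum => C CM.
apply: ler_wsqrtr; apply: ler_sum => t _.
have q0 : 0 <= lam C t / s t by rewrite divr_ge0 ?n1 //; have := s_ge1 t; lra.
have e : lam C t / s t * s t = lam C t by rewrite divfK.
have := s_ge1 t; have := n1 C CM t.
move: q0 e; set q := lam C t / s t => q0 e hl hs.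
have hq : q <= lam C t by nra.
by rewrite !expr2; apply: ler_pM.
Qed.

Lemma UB_le_pp1 : UB R S <= pp (const_mx 1).
Proof.
apply: pp_ge => lam fl; have [l' [f' le']] := feas_norm fl; apply: le_trans le'.
apply: (inf_le_elt (l := 0)); last by exists l'.
by move=> z [l [_ ->]]; apply: obj_ge0.
Qed.

Lemma ub_feas_ex : exists lam : seq 'I_T -> 'I_T -> R, ub_feasible S lam.
Proof.
have [l fl] := feas_ex (const_mx 1); have [l' [f' _]] := feas_norm fl.
by exists l'.
Qed.

Lemma dual_le : dual_value R S <= UB R S.
Proof.
apply: ge_sup.
  exists (dual_objective (fun _ : 'I_T => (0 : R))), (fun _ => 0); split => //; split => //.
  by move=> C _; rewrite big1 // => t _; rewrite expr2 mulr0.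
move=> z [mu [fm ->]].
have [l fl] := ub_feas_ex.
apply: lb_le_inf; first by exists (ub_objective S l), l.
by move=> w [l' [fl' ->]]; apply: weak.
Qed.

Lemma le_dual : UB R S <= dual_value R S.
Proof.
have [mu [hmu h1]] := hb_final (const_mx 1) pp_sublin.
have mu0 : forall t, 0 <= mu t.
  move=> t.
  have := hmu (\row_i (if i == t then -1 else 0)).
  have -> : \sum_i mu i * (\row_i (if i == t then -1 else 0) : 'rV[R]_T) 0 i = - mu t.
    rewrite (eq_bigr (fun i => if i == t then - mu i else 0)); last first.
      by move=> i _; rewrite mxE; case: ifP; rewrite ?mulrN1 ?mulr0.
    by rewrite -big_mkcond big_pred1_eq.
  have f0 : feas (\row_i (if i == t then -1 else 0)) (fun _ _ => 0).
    by apply: feas0 => i; rewrite mxE; case: ifP => // _; rewrite lerN10.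
  have := pp_le f0; rewrite obj0; lra.
have dfeas : dual_feasible S mu.
  split => // C CM.
  have uC := M_uniqC wf CM.
  set x : 'rV[R]_T := \row_i (if i \in C then mu i else 0).
  have hx := hmu x.
  have ex : \sum_i mu i * x 0 i = \sum_(t <- C) mu t ^+ 2.
    rewrite [RHS]big_uniq // [RHS]big_mkcond /=; apply: eq_bigr => t _.
    by rewrite mxE; case: ifP; rewrite ?mulr0 // expr2.
  pose lamC (C' : seq 'I_T) t := if C' == C then x 0 t else 0.
  have fC : feas x lamC.
    split.
    - move=> C' _ t tC'; rewrite /lamC; case: eqP => // E.
      by rewrite mxE -E (negbTE tC').
    - move=> C' _ t; rewrite /lamC; case: eqP => // _.
      by rewrite mxE; case: ifP.
    - move=> t; rewrite (big_rem C CM) /= /lamC eqxx lerDl.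
      apply: sumr_ge0 => C' _; case: eqP => // _.
      by rewrite mxE; case: ifP.
  have := pp_le fC.
  have -> : ub_objective S lamC = Num.sqrt (\sum_(t <- C) mu t ^+ 2).
    rewrite /ub_objective (big_rem C CM) /=.
    have -> : \sum_(y <- rem C M) Num.sqrt (\sum_(t <- y) lamC y t ^+ 2) = 0.
      rewrite big_seq big1 // => C' C'r.
      have : C' != C.
        by move: C'r; rewrite (mem_rem_uniq _ (M_uniq S)) inE => /andP [].
      rewrite /lamC; move/negbTE => ->.
      by rewrite big1 ?sqrtr0 // => t _; rewrite expr2 mulr0.
    rewrite addr0 /lamC eqxx.
    congr (Num.sqrt _); rewrite big_seq [RHS]big_seq; apply: eq_bigr => t tC.
    by rewrite mxE tC.
  move=> hK.
  have hKK : \sum_(t <- C) mu t ^+ 2 <= Num.sqrt (\sum_(t <- C) mu t ^+ 2).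
    by rewrite -[X in X <= _]ex; apply: le_trans hx hK.
  have K0 : 0 <= \sum_(t <- C) mu t ^+ 2 by apply: sumr_ge0 => t _; apply: sqr_ge0.
  move: hKK K0; set K := \sum_(t <- C) mu t ^+ 2 => hK2 K0.
  have e := sqr_sqrtr K0; have := sqrtr_ge0 K.
  move: hK2 e; set q := Num.sqrt K => hK2 e q0.
  suff : q <= 1 by nra.
  nra.
have bnd : has_ubound [set v : R | exists mu, dual_feasible S mu /\ v = dual_objective mu].
  have [l fl] := ub_feas_ex.
  by exists (ub_objective S l) => z [m [fm ->]]; apply: weak.
apply: le_trans UB_le_pp1 _.
rewrite -h1.
have -> : \sum_i mu i * (const_mx 1 : 'rV[R]_T) 0 i = dual_objective mu.
  by rewrite /dual_objective; apply: eq_bigr => i _; rewrite mxE mulr1.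
by apply: ub_le_sup => //; exists mu.
Qed.

End App.

Theorem theorem2 (R : realType) (T : nat) (S : 'I_T -> {set 'I_T}) :
  tfg_wf S -> dual_value R S = UB R S.
Proof.
move=> wf; apply/eqP; rewrite eq_le; apply/andP; split.
  exact: dual_le.
exact: le_dual.
Qed.
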